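(* Let $\mathbb{A}\colon\mathbb{R}^d\to\mathbb{R}^d$ be Lipschitz continuous and monotone, $T>0$, $X_0\in\mathbb{R}^d$, and let $(X,Z)\in\mathcal{C}^1([0,T),\mathbb{R}^{2d})$ be the (unique) solution of \[ \dot X(t)=-Z(t)-\mathbb{A}(X(t)),\qquad \dot Z(t)=-\frac{1}{T-t}Z(t)-\frac{1}{T-t}\mathbb{A}(X(t)),\qquad X(0)=X_0,\ Z(0)=0. \] Then $\Psi(t)=\frac{1}{(T-t)^2}\|\dot X(t)\|^2$ is nonincreasing on $[0,T)$, and for all $t\in[0,T)$, \[ \|\dot Z(t)\|^2=\frac{1}{(T-t)^2}\|\dot X(t)\|^2\le\frac{1}{T^2}\|\mathbb{A}(X_0)\|^2. \]
   Context: Monotone: $\langle\mathbb{A}x-\mathbb{A}y,x-y\rangle\ge0$ for all $x,y$. *)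

(* Defs.v *)
From HB Require Import structures.
From mathcomp Require Import all_boot all_order all_algebra.
From mathcomp Require Import all_classical all_reals all_analysis.
Set Implicit Arguments. Unset Strict Implicit. Unset Printing Implicit Defensive.
Import Order.TTheory GRing.Theory Num.Theory.
Import numFieldNormedType.Exports.
Local Open Scope classical_set_scope.
Local Open Scope ring_scope.

Section Defs.
Variables (R : realType) (d : nat).

Definition edot (u v : 'rV[R]_d) : R := \sum_(i < d) u ord0 i * v ord0 i.
Definition enorm (u : 'rV[R]_d) : R := Num.sqrt (edot u u).

Definition lipschitz_op (A : 'rV[R]_d -> 'rV[R]_d) : Prop :=
  exists L : R, forall x y, enorm (A x - A y) <= L * enorm (x - y).

Definition monotone_op (A : 'rV[R]_d -> 'rV[R]_d) : Prop :=
  forall x y, 0 <= edot (A x - A y) (x - y).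

Definition Ico0 (T : R) : set R := [set s | 0 <= s /\ s < T].

(* f' is the derivative of f on [0,T), taken within [0,T) (one-sided at 0) *)
Definition has_deriv_on_Ico (T : R) (f f' : R -> 'rV[R]_d) : Prop :=
  forall t, Ico0 T t ->
    (fun s => (s - t)^-1 *: (f s - f t)) @ within (Ico0 T `\ t) (nbhs t)
      --> f' t.

Definition C1_on_Ico (T : R) (f f' : R -> 'rV[R]_d) : Prop :=
  has_deriv_on_Ico T f f' /\ {within Ico0 T, continuous f'}.

End Defs.

(* Main.v *)
Set Warnings "-all".
Require Import Defs.
From HB Require Import structures.
From mathcomp Require Import all_boot all_order all_algebra.
From mathcomp Require Import all_classical all_reals all_analysis.
From mathcomp Require Import lra ring.
Import Order.TTheory GRing.Theory Num.Theory.
Import numFieldNormedType.Exports.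
Local Open Scope classical_set_scope.
Local Open Scope ring_scope.
Section Vec.
Variables (R : realType) (d : nat).
Implicit Types u v w : 'rV[R]_d.

Lemma edotC u v : edot u v = edot v u.
Proof. by rewrite /edot; apply: eq_bigr => i _; rewrite mulrC. Qed.

Lemma edotDl u v w : edot (u + v) w = edot u w + edot v w.
Proof. by rewrite /edot -big_split; apply: eq_bigr => i _; rewrite !mxE mulrDl. Qed.

Lemma edotDr u v w : edot w (u + v) = edot w u + edot w v.
Proof. by rewrite edotC edotDl !(edotC w). Qed.

Lemma edotZl (c : R) u v : edot (c *: u) v = c * edot u v.
Proof. by rewrite /edot mulr_sumr; apply: eq_bigr => i _; rewrite !mxE mulrA. Qed.

Lemma edotZr (c : R) u v : edot u (c *: v) = c * edot u v.
Proof. by rewrite edotC edotZl edotC. Qed.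

Lemma edotNl u v : edot (- u) v = - edot u v.
Proof. by rewrite -scaleN1r edotZl mulN1r. Qed.

Lemma edotBl u v w : edot (u - v) w = edot u w - edot v w.
Proof. by rewrite edotDl edotNl. Qed.

Lemma edot_ge0 u : 0 <= edot u u.
Proof. by apply: sumr_ge0 => i _; rewrite -expr2 sqr_ge0. Qed.

Lemma enorm2 u : enorm u ^+ 2 = edot u u.
Proof. by rewrite /enorm sqr_sqrtr // edot_ge0. Qed.

Lemma enorm_ge0 u : 0 <= enorm u.
Proof. exact: sqrtr_ge0. Qed.

Lemma entry_le u i : `|u ord0 i| <= `|u|.
Proof.
rewrite [`|u|]mx_normrE.
exact: (le_bigmax _ (fun ij : 'I_1 * 'I_d => `|u ij.1 ij.2|) (ord0, i)).
Qed.

Lemma edot_bound u v : `|edot u v| <= d%:R * `|u| * `|v|.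
Proof.
rewrite /edot; apply: (le_trans (ler_norm_sum _ _ _)).
apply: (@le_trans _ _ (\sum_(i < d) `|u| * `|v|)).
  apply: ler_sum => i _; rewrite normrM; apply: ler_pM => //; exact: entry_le.
by rewrite sumr_const card_ord -mulrA mulr_natl.
Qed.

Lemma mx_le_enorm u : `|u| <= enorm u.
Proof.
rewrite [`|u|]mx_normrE; apply: bigmax_le; first exact: enorm_ge0.
move=> [i j] _ /=.
have -> : i = ord0 by apply/val_inj; case: i => [[]].
rewrite -sqrtr_sqr /enorm ler_sqrt; last by rewrite edot_ge0.
rewrite /edot (bigD1 j) //= expr2 lerDl.
by apply: sumr_ge0 => k _; rewrite -expr2 sqr_ge0.
Qed.

Lemma enorm_le_mx u : enorm u <= d%:R * `|u|.
Proof.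
have h0 : 0 <= d%:R * `|u| by rewrite mulr_ge0.
rewrite -(ger0_norm h0) -sqrtr_sqr /enorm ler_sqrt ?sqr_ge0 //.
apply: (@le_trans _ _ (d%:R * `|u| ^+ 2)).
  apply: (@le_trans _ _ (\sum_(i < d) `|u| ^+ 2)).
    rewrite /edot; apply: ler_sum => i _; rewrite -expr2 -real_normK ?num_real //.
    by rewrite lerXn2r ?nnegrE // entry_le.
  by rewrite sumr_const card_ord mulr_natl.
rewrite exprMn ler_wpM2r ?sqr_ge0 //.
case: d => [|n]; first by rewrite expr2 mul0r.
by rewrite expr2 ler_peMl // ler1n.
Qed.

Lemma edotZZ (c c' : R) u v : edot (c *: u) (c' *: v) = c * c' * edot u v.
Proof. by rewrite edotZl edotZr mulrA. Qed.

Lemma edot_expand u w (r : R) :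
  edot (u - r *: w) (u - r *: w) = edot u u - 2 * r * edot u w + r ^+ 2 * edot w w.
Proof.
rewrite edotBl !(edotC _ (u - _)) !edotBl !edotZl !edotZr (edotC w u).
ring.
Qed.

Lemma scal (P Q N W X1 X2 X3 k c u : R) : 0 < u -> 0 < c -> k != 0 -> 0 <= N ->
  0 <= W -> `|P| <= X1 -> `|Q| <= X2 -> W <= X3 ->
 (- (2 * (k / u)) * (P + c^-1 * (N - Q)) + (k / u) ^+ 2 * W) / k <=
   2 / u * X1 + 2 / (u * c) * X2 + `|k| / u ^+ 2 * X3.
Proof.
move=> u0 c0 k0 N0 W0 hP hQ hW.
have -> : (- (2 * (k / u)) * (P + c^-1 * (N - Q)) + (k / u) ^+ 2 * W) / k =
  2 / u * (- P) + 2 / (u * c) * (- N) + 2 / (u * c) * Q + k / u ^+ 2 * W.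
  by field; rewrite k0 !gt_eqF.
have a0 : 0 <= 2 / u by rewrite divr_ge0 // ltW.
have b0 : 0 <= 2 / (u * c) by rewrite divr_ge0 // ltW // mulr_gt0.
have g0 : 0 < u ^+ 2 by rewrite exprn_gt0.
have h1 : 2 / u * (- P) <= 2 / u * X1.
  by rewrite ler_wpM2l // (le_trans _ hP) // -normrN ler_norm.
have h2 : 2 / (u * c) * (- N) <= 0 by rewrite mulrN oppr_le0 mulr_ge0.
have h3 : 2 / (u * c) * Q <= 2 / (u * c) * X2.
  by rewrite ler_wpM2l // (le_trans _ hQ) // ler_norm.
have h4 : k / u ^+ 2 * W <= `|k| / u ^+ 2 * X3.
  apply: (@le_trans _ _ (`|k| / u ^+ 2 * W)).
    rewrite ler_wpM2r //; apply: ler_wpM2r; [by rewrite invr_ge0 ltW | exact: ler_norm].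
  by rewrite ler_wpM2l // divr_ge0 // ltW.
lra.
Qed.

Lemma key_ineq (A : 'rV[R]_d -> 'rV[R]_d) (L T t s : R) (Xt Xs Zt Zs Vt Vs Ut e g : 'rV[R]_d) :
 0 <= L -> (forall x y, enorm (A x - A y) <= L * enorm (x - y)) -> monotone_op A ->
 t < T -> s < T -> s != t ->
 Vt = - Zt - A Xt -> Vs = - Zs - A Xs -> Ut = (T - t)^-1 *: Vt ->
 e = (s - t)^-1 *: (Zs - Zt) - Ut -> g = (s - t)^-1 *: (Xs - Xt) - Vt ->
 ((T - s)^-2 * enorm Vs ^+ 2 - (T - t)^-2 * enorm Vt ^+ 2) / (s - t) <=
 2 / (T - s) * (d%:R * `|Ut| * `|e|)
 + 2 / ((T - s) * (T - t)) * (d%:R * `|g| * (L * d%:R * (`|Vt| + `|g|)))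
 + `|s - t| / (T - s) ^+ 2 * (d%:R * (`|e| + L * d%:R * (`|Vt| + `|g|)) ^+ 2).
Proof.
move=> L0 Lip mono tT sT st hVt hVs hUt he hg.
have k0 : s - t != 0 by rewrite subr_eq0.
have c0 : 0 < T - t by rewrite subr_gt0.
have u0 : 0 < T - s by rewrite subr_gt0.
pose a := (s - t)^-1 *: (A Xs - A Xt). pose w := e + a.
have hUs : (T - s)^-1 *: Vs = Ut - ((s - t) / (T - s)) *: w.
  apply/rowP => i; rewrite /w /a he hUt hVs hVt !mxE.
  field. by rewrite k0 !gt_eqF.
have hPs : (T - s)^-2 * enorm Vs ^+ 2 = edot ((T - s)^-1 *: Vs) ((T - s)^-1 *: Vs).
  by rewrite enorm2 edotZZ -expr2 exprVn.
have hPt : (T - t)^-2 * enorm Vt ^+ 2 = edot Ut Ut.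
  by rewrite hUt enorm2 edotZZ -expr2 exprVn.
rewrite hPs hPt hUs edot_expand.
have hX : Vt + g = (s - t)^-1 *: (Xs - Xt) by rewrite hg addrC subrK.
have hN : 0 <= edot (Vt + g) a.
  rewrite hX /a edotZZ; apply: mulr_ge0; first by rewrite -expr2 sqr_ge0.
  by rewrite edotC; apply: mono.
have hP' : edot Ut w = edot Ut e + (T - t)^-1 * (edot (Vt + g) a - edot g a).
  rewrite /w edotDr; congr (_ + _).
  by rewrite hUt edotZl edotDl; ring.
rewrite hP'.
have M0 : 0 <= L * d%:R * (`|Vt| + `|g|) by rewrite !mulr_ge0 ?addr_ge0.
have hW0 : 0 <= edot w w := edot_ge0 w.
have hPb : `|edot Ut e| <= d%:R * `|Ut| * `|e| := edot_bound Ut e.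
have ha : `|a| <= L * d%:R * (`|Vt| + `|g|).
  rewrite /a normrZ.
  have h1 : `|A Xs - A Xt| <= L * d%:R * `|Xs - Xt|.
    apply: (le_trans (mx_le_enorm _)); apply: (le_trans (Lip _ _)).
    rewrite -mulrA ler_wpM2l //; exact: enorm_le_mx.
  apply: (le_trans (ler_wpM2l (normr_ge0 _) h1)).
  rewrite mulrCA -normrZ -hX ler_wpM2l ?mulr_ge0 //; exact: ler_normD.
have hQb : `|edot g a| <= d%:R * `|g| * (L * d%:R * (`|Vt| + `|g|)).
  apply: (le_trans (edot_bound g a)); rewrite ler_wpM2l // mulr_ge0 //.
have hWb : edot w w <= d%:R * (`|e| + L * d%:R * (`|Vt| + `|g|)) ^+ 2.
  apply: (le_trans (ler_norm _)); apply: (le_trans (edot_bound w w)).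
  rewrite -mulrA ler_wpM2l // -expr2 lerXn2r ?nnegrE ?addr_ge0 //.
  apply: (le_trans (ler_normD _ _)); rewrite lerD2l; exact: ha.
have hs := scal _ _ _ _ _ _ _ _ _ _ u0 c0 k0 hN hW0 hPb hQb hWb.
apply: le_trans hs; rewrite le_eqVlt; apply/orP; left; apply/eqP.
congr (_ / _); ring.
Qed.
End Vec.
Section Dini.
Variable R : realType.

Lemma quot_le_pos (x k e : R) : 0 < k -> x / k <= e -> x <= e * k.
Proof. by move=> k0; rewrite ler_pdivrMr. Qed.
Lemma quot_le_neg (x k e : R) : k < 0 -> x / k <= e -> e * k <= x.
Proof. by move=> k0; rewrite ler_ndivrMr. Qed.

Lemma dini_eps (f : R -> R) (a b : R) (eps : R) : a <= b -> 0 < eps ->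
 (forall t, a <= t <= b -> exists2 del, 0 < del & forall s, a <= s <= b ->
     s != t -> `|s - t| < del -> (f s - f t) / (s - t) <= eps) ->
 f b <= f a + eps * (b - a).
Proof.
move=> ab ep H.
pose g v := f v - f a - eps * (v - a).
suff : g b <= 0 by rewrite /g; lra.
pose S := [set u | a <= u <= b /\ forall v, a <= v <= u -> g v <= 0].
have Sa : S a.
  split; first by rewrite lexx ab.
  move=> v /andP[h1 h2]; have -> : v = a by apply/eqP; rewrite eq_le h1 h2.
  by rewrite /g !subrr mulr0 subrr.
have hS : has_sup S by split; [exists a | exists b => u [/andP[_ ->]]].
set m := sup S.
have am : a <= m by apply: sup_upper_bound.
have mb : m <= b.
  apply: sup_le_ub; first by exists a.
  by move=> u [/andP[_ ->]].
have C1 : forall v, a <= v -> v < m -> g v <= 0.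
  move=> v av vm.
  have vm0 : 0 < m - v by lra.
  have [u [/andP[au ub] Hu] hu] := sup_adherent vm0 hS.
  apply: Hu; rewrite av /=; rewrite -/m in hu; apply: ltW; lra.
have amb : a <= m <= b by rewrite am mb.
have [del del0 Hd] := H m amb.
have C2 : g m <= 0.
  have [->|ltam] := eqVneq m a; first by apply: (Sa.2); rewrite lexx.
  have ltam' : a < m by rewrite lt_neqAle eq_sym ltam am.
  pose v := Num.max a (m - del / 2).
  have av : a <= v by rewrite /v le_max lexx.
  have vm : v < m by rewrite /v gt_max ltam'; lra.
  have := Hd v; rewrite av /= (le_trans (ltW vm) mb) => /(_ isT).
  rewrite (lt_eqF vm) => /(_ isT).
  have vd : `|v - m| < del.
    rewrite ler0_norm; last by lra.
    have : m - del / 2 <= v by rewrite /v le_max lexx orbT.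
    lra.
  move=> /(_ vd) /quot_le_neg.
  have vm0 : v - m < 0 by lra.
  move=> /(_ vm0) h.
  have := C1 v av vm; rewrite /g; lra.
have C3 : m = b.
  apply/eqP; rewrite eq_le mb /=; rewrite leNgt; apply/negP => mb'.
  pose w := Num.min b (m + del / 2).
  have mw : m < w by rewrite /w lt_min mb'; lra.
  have Sw : S w.
    split; first by rewrite (le_trans am (ltW mw)) /w ge_min lexx.
    move=> v /andP[av vw].
    have [vm|mv|->] := ltgtP v m; [exact: C1|  | exact: C2].
    have := Hd v; rewrite (le_trans am (ltW mv)) /=.
    have vb : v <= b by apply: (le_trans vw); rewrite /w ge_min lexx.
    rewrite vb (gt_eqF mv) => /(_ isT isT).
    have vd : `|v - m| < del.
      rewrite ger0_norm; last by lra.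
      have : w <= m + del / 2 by rewrite /w ge_min lexx orbT.
      lra.
    move=> /(_ vd) /quot_le_pos.
    have vm0 : 0 < v - m by lra.
    move=> /(_ vm0) h.
    move: C2; rewrite /g; lra.
  have := sup_upper_bound hS Sw; rewrite -/m; lra.
by rewrite -C3.
Qed.

Lemma dini (f : R -> R) (a b : R) : a <= b ->
 (forall t, a <= t <= b -> forall eps, 0 < eps -> exists2 del, 0 < del &
     forall s, a <= s <= b -> s != t -> `|s - t| < del -> (f s - f t) / (s - t) <= eps) ->
 f b <= f a.
Proof.
move=> ab H; apply/ler_addgt0Pr => e e0.
have c0 : 0 < b - a + 1 by lra.
have := @dini_eps f a b (e / (b - a + 1)) ab (divr_gt0 e0 c0).
move=> /(_ (fun t ht => H t ht _ (divr_gt0 e0 c0))) h.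
apply: (le_trans h); rewrite lerD2l.
rewrite -[leRHS](@mulfK _ (b - a + 1)) ?gt_eqF //.
rewrite [e * _ / _]mulrAC ler_pM2l ?divr_gt0 //; lra.
Qed.
End Dini.
Theorem lemmaH3 (R : realType) (d : nat) (A : 'rV[R]_d -> 'rV[R]_d)
    (T : R) (X0 : 'rV[R]_d) (X Z X' Z' : R -> 'rV[R]_d) :
  lipschitz_op A -> monotone_op A -> 0 < T ->
  C1_on_Ico T X X' -> C1_on_Ico T Z Z' ->
  (forall t, Ico0 T t -> X' t = - Z t - A (X t)) ->
  (forall t, Ico0 T t ->
     Z' t = - (T - t)^-1 *: Z t - (T - t)^-1 *: A (X t)) ->
  X 0 = X0 -> Z 0 = 0 ->
  (forall s t, 0 <= s -> s <= t -> t < T ->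
     (T - t)^-2 * enorm (X' t) ^+ 2 <= (T - s)^-2 * enorm (X' s) ^+ 2) /\
  (forall t, Ico0 T t ->
     enorm (Z' t) ^+ 2 = (T - t)^-2 * enorm (X' t) ^+ 2 /\
     (T - t)^-2 * enorm (X' t) ^+ 2 <= T^-2 * enorm (A X0) ^+ 2).
Proof.
move=> [L0 Lip0] mono T0 [dX _] [dZ _] hX' hZ' hX0 hZ0.
pose L := `|L0|.
have L0p : 0 <= L by rewrite /L normr_ge0.
have Lip : forall x y, enorm (A x - A y) <= L * enorm (x - y).
  move=> x y; apply: (le_trans (Lip0 x y)); apply: ler_wpM2r; first exact: enorm_ge0.
  exact: ler_norm.
have hZX : forall t, Ico0 T t -> Z' t = (T - t)^-1 *: X' t.
  move=> t ht; rewrite hZ' // hX' // scalerBr scaleNr scalerN.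
  done.
have mono_Psi : forall s t, 0 <= s -> s <= t -> t < T ->
     (T - t)^-2 * enorm (X' t) ^+ 2 <= (T - s)^-2 * enorm (X' s) ^+ 2.
  move=> a b a0 ab bT.
  apply: (@dini R (fun s => (T - s)^-2 * enorm (X' s) ^+ 2) a b ab).
  move=> τ /andP[aτ τb] eps eps0.
  have τI : Ico0 T τ by split; [exact: le_trans aτ| exact: le_lt_trans bT].
  pose Vt := X' τ. pose Ut := (T - τ)^-1 *: Vt.
  pose e s := (s - τ)^-1 *: (Z s - Z τ) - Ut.
  pose g s := (s - τ)^-1 *: (X s - X τ) - Vt.
  have WF : Filter (within (Ico0 T `\ τ) (nbhs τ)) := within_filter _ (nbhs_filter τ).
  have he : e s @[s --> within (Ico0 T `\ τ) (nbhs τ)] --> (0 : 'rV[R]_d).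
    rewrite -(subrr Ut); apply: cvgB; last exact: cvg_cst.
    by rewrite /Ut /Vt -hZX //; exact: dZ.
  have hg : g s @[s --> within (Ico0 T `\ τ) (nbhs τ)] --> (0 : 'rV[R]_d).
    rewrite -(subrr Vt); apply: cvgB; last exact: cvg_cst.
    exact: dX.
  have hs : s @[s --> within (Ico0 T `\ τ) (nbhs τ)] --> τ by apply: cvg_within.
  have ne : `|e s| @[s --> within (Ico0 T `\ τ) (nbhs τ)] --> (0 : R).
    by have := cvg_norm he; rewrite normr0; apply.
  have ng : `|g s| @[s --> within (Ico0 T `\ τ) (nbhs τ)] --> (0 : R).
    by have := cvg_norm hg; rewrite normr0; apply.
  have nk : `|s - τ| @[s --> within (Ico0 T `\ τ) (nbhs τ)] --> (0 : R).
    by have := cvg_norm (cvgB hs (cvg_cst τ)); rewrite subrr normr0; apply.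
  have c0 : T - τ != 0 by rewrite subr_eq0 gt_eqF //; case: τI.
  have hTs : (T - s) @[s --> within (Ico0 T `\ τ) (nbhs τ)] --> T - τ by apply: cvgB; [exact: cvg_cst | exact: hs].
  pose proof (cvgV c0 hTs) as iTs.
  pose proof (cvgV (mulf_neq0 c0 c0) (cvgM hTs hTs)) as iTs2.
  pose proof (cvgV (mulf_neq0 c0 c0) (cvgM hTs (cvg_cst (T - τ)))) as iTsc.
  pose proof (cvgM (cvg_cst (L * d%:R)) (cvgD (cvg_cst `|Vt|) ng)) as Mc.
  pose proof (cvgD ne Mc) as pe.
  pose proof (cvgM (cvgM (cvg_cst (2 : R)) iTs) (cvgM (cvg_cst (d%:R * `|Ut|)) ne)) as t1.
  pose proof (cvgM (cvgM (cvg_cst (2 : R)) iTsc) (cvgM (cvgM (cvg_cst (d%:R : R)) ng) Mc)) as t2.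
  pose proof (cvgM (cvgM nk iTs2) (cvgM (cvg_cst (d%:R : R)) (cvgM pe pe))) as t3.
  pose proof (cvgD (cvgD t1 t2) t3) as hB0.
  pose M s := L * d%:R * (`|Vt| + `|g s|).
  pose B s := 2 / (T - s) * (d%:R * `|Ut| * `|e s|)
     + 2 / ((T - s) * (T - τ)) * (d%:R * `|g s| * M s)
     + `|s - τ| / (T - s) ^+ 2 * (d%:R * (`|e s| + M s) ^+ 2).
  have hnear : \forall s \near within (Ico0 T `\ τ) (nbhs τ), B s < eps.
    pose proof (cvgr_lt _ hB0 eps) as hh.
    rewrite !(mulr0, mul0r, addr0, add0r) in hh.
    apply: filterS (hh eps0) => s; exact.
  move: hnear; rewrite near_withinE => /nbhs_ballP [δ δ0 Hδ].
  exists δ => // s /andP[hsa sb] sτ hsd.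
  have sI : (Ico0 T `\ τ) s.
    split; last by move=> /= h; move: sτ; rewrite h eqxx.
    by split; [exact: le_trans hsa | exact: le_lt_trans bT].
  have Bs : B s < eps.
    apply: (Hδ s) => //.
    by rewrite -ball_normE /ball_ /= distrC.
  apply: le_trans (ltW Bs).
  apply: key_ineq L0p Lip mono _ _ _ _ _ _ _ _ => //.
  - by case: τI.
  - by case: sI => -[].
  - exact: hX'.
  - by apply: hX'; case: sI.
split; first exact: mono_Psi.
move=> t ht; split.
  by rewrite hZX // !enorm2 edotZZ -expr2 exprVn.
apply: le_trans (mono_Psi 0 t (lexx 0) ht.1 ht.2) _.
have I0 : Ico0 T 0 by split; [exact: lexx | exact: T0].
rewrite hX' // hZ0 hX0 subr0 oppr0 sub0r !enorm2.
by rewrite -[- A X0]scaleN1r edotZZ mulrNN !mul1r.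
Qed.
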